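(* Assume that the graph Laplacian $\mathbf{L}$ has exactly $r$ distinct eigenvalues. A signal $f\in\mathcal{A}_{\mathbf{L}}$ is a positive semi-definite (respectively positive definite) function if and only if the $r\times r$ Hankel matrix $\mathbf{H}_r(f)$ is positive semi-definite (respectively positive definite), where $$\mathbf{H}_r(x)=\big(f_{\mathbb{1}}^\intercal\mathbf{L}^{i+j-2}x\big)_{i,j=1}^{r}.$$
   Context: Let $G$ be a graph with vertices $v_1,\dots,v_n$, symmetric non-negative weighted adjacency matrix $\mathbf{A}$, degree matrix $\mathbf{D}=\mathrm{diag}(\sum_k\mathbf{A}_{ik})$ (positive), and normalized Laplacian $\mathbf{L}=\mathbf{I}_n-\mathbf{D}^{-1/2}\mathbf{A}\mathbf{D}^{-1/2}$. Signals are vectors in $\mathcal{L}(G)\cong\mathbb{R}^n$ with standard basis $e_1,\dots,e_n$. Fix an orthonormal eigendecomposition $\mathbf{L}=\mathbf{U}\,\mathrm{diag}(\lambda_1,\dots,\lambda_n)\mathbf{U}^\intercal$ with columns $u_1,\dots,u_n$. Fourier transform $\hat{x}=\mathbf{U}^\intercal x$; convolution operator $\mathbf{C}_x=\mathbf{U}\,\mathrm{diag}(\hat{x})\mathbf{U}^\intercal$; $f_{\mathbb{1}}=\sum_{k=1}^n u_k$; $\mathcal{A}_{\mathbf{L}}=\mathrm{span}\{f_{\mathbb{1}},\mathbf{L}f_{\mathbb{1}},\dots,\mathbf{L}^{n-1}f_{\mathbb{1}}\}$. For $f\in\mathcal{L}(G)$ let $(\mathbf{K}_f)_{ij}=(\mathbf{C}_{e_j}f)(v_i)$;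 $f$ is called a positive semi-definite (positive definite) function if $\mathbf{K}_f$ is symmetric and positive semi-definite (strictly positive definite). *)

(* Defs.v *)
From HB Require Import structures.
From mathcomp Require Import all_boot all_order all_algebra.
From mathcomp Require Import reals.
Set Implicit Arguments. Unset Strict Implicit. Unset Printing Implicit Defensive.
Import Order.TTheory GRing.Theory Num.Theory.
Local Open Scope ring_scope.

Section Defs.
Variable R : realType.
Variable n : nat.

Definition degmx (A : 'M[R]_n) : 'M[R]_n :=
  \matrix_(i, j) (if i == j then \sum_k A i k else 0).

Definition degmx_invsqrt (A : 'M[R]_n) : 'M[R]_n :=
  \matrix_(i, j) (if i == j then (Num.sqrt (\sum_k A i k))^-1 else 0).

Definition normLap (A : 'M[R]_n) : 'M[R]_n :=
  1%:M - degmx_invsqrt A *m A *m degmx_invsqrt A.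

Definition stdvec (j : 'I_n) : 'cV[R]_n := \col_i (if i == j then 1 else 0).

Definition gft (U : 'M[R]_n) (x : 'cV[R]_n) : 'cV[R]_n := U^T *m x.

Definition convop (U : 'M[R]_n) (x : 'cV[R]_n) : 'M[R]_n :=
  U *m diag_mx (gft U x)^T *m U^T.

Definition f_one (U : 'M[R]_n) : 'cV[R]_n := \sum_(k < n) col k U.

Definition in_AL (U L : 'M[R]_n) (f : 'cV[R]_n) : Prop :=
  exists c : 'I_n -> R, f = \sum_(k < n) c k *: (L ^+ k *m f_one U).

Definition Kmat (U : 'M[R]_n) (f : 'cV[R]_n) : 'M[R]_n :=
  \matrix_(i, j) (convop U (stdvec j) *m f) i 0.

(* Hankel matrix H_r(x) = (f_1^T L^{i+j-2} x)_{i,j=1..r}  (0-indexed: i+j) *)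
Definition hankel (U L : 'M[R]_n) (r : nat) (x : 'cV[R]_n) : 'M[R]_r :=
  \matrix_(i, j) ((f_one U)^T *m L ^+ (i + j) *m x) 0 0.

End Defs.

Definition psdmx (R : realType) (m : nat) (M : 'M[R]_m) : Prop :=
  M^T = M /\ forall x : 'cV[R]_m, 0 <= (x^T *m M *m x) 0 0.
Definition pdmx (R : realType) (m : nat) (M : 'M[R]_m) : Prop :=
  M^T = M /\ forall x : 'cV[R]_m, x != 0 -> 0 < (x^T *m M *m x) 0 0.

Definition psd_function (R : realType) (n : nat) (U : 'M[R]_n) (f : 'cV[R]_n) :=
  psdmx (Kmat U f).
Definition pd_function (R : realType) (n : nat) (U : 'M[R]_n) (f : 'cV[R]_n) :=
  pdmx (Kmat U f).

(* Main.v *)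
Require Import Defs.
From HB Require Import structures.
From mathcomp Require Import all_boot all_order all_algebra.
From mathcomp Require Import reals ring lra.
Import Order.TTheory GRing.Theory Num.Theory.
Local Open Scope ring_scope.

Section Aux.
Variable R : realType.

Lemma sq_gt0 (t : R) : t != 0 -> 0 < t ^+ 2.
Proof. by move=> t0; rewrite lt0r sqrf_eq0 t0 sqr_ge0. Qed.

Lemma qf_diag (m : nat) (y : 'cV[R]_m) (d : 'rV[R]_m) :
  (y^T *m diag_mx d *m y) 0 0 = \sum_k d 0 k * y k 0 ^+ 2.
Proof.
rewrite mul_mx_diag !mxE; apply: eq_bigr => k _; rewrite !mxE; ring.
Qed.

Lemma nz_entry (m : nat) (y : 'cV[R]_m) : y != 0 -> exists k, y k 0 != 0.
Proof.
move=> y0; case: (boolP [exists k, y k 0 != 0]) => [/existsP //|/existsPn H].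
case/negP: y0; apply/eqP/matrixP => i j; rewrite (ord1 j) mxE.
by move: (H i); rewrite negbK => /eqP.
Qed.

Variable n : nat.
Variable U : 'M[R]_n.
Hypothesis hU : U *m U^T = 1%:M.

Lemma hU' : U^T *m U = 1%:M.
Proof. exact: mulmx1C. Qed.

Lemma stdvecE (j k : 'I_n) : stdvec R j k 0 = (k == j)%:R.
Proof. by rewrite mxE; case: eqP. Qed.

Lemma qf_conj (d : 'rV[R]_n) (x : 'cV[R]_n) :
  (x^T *m (U *m diag_mx d *m U^T) *m x) 0 0 = \sum_k d 0 k * (U^T *m x) k 0 ^+ 2.
Proof.
rewrite -qf_diag trmx_mul trmxK !mulmxA //.
Qed.

Lemma psd_conj (d : 'rV[R]_n) :
  (psdmx (U *m diag_mx d *m U^T) <-> forall k, 0 <= d 0 k) /\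
  (pdmx (U *m diag_mx d *m U^T) <-> forall k, 0 < d 0 k).
Proof.
have sym : (U *m diag_mx d *m U^T)^T = U *m diag_mx d *m U^T.
  by rewrite !trmx_mul trmxK tr_diag_mx mulmxA.
have ek (k : 'I_n) : (U^T *m (U *m stdvec R k)) = stdvec R k by rewrite mulmxA hU' mul1mx.
have qk (k : 'I_n) : ((U *m stdvec R k)^T *m (U *m diag_mx d *m U^T) *m (U *m stdvec R k)) 0 0 = d 0 k.
  rewrite qf_conj ek (bigD1 k) //= big1 ?addr0 => [|j /negbTE jk];
    rewrite stdvecE ?eqxx ?jk /=; ring.
have nzk (k : 'I_n) : U *m stdvec R k != 0.
  apply/eqP => /(congr1 (mulmx U^T)); rewrite ek mulmx0 => /matrixP /(_ k 0).
  by rewrite stdvecE eqxx mxE => /eqP; rewrite oner_eq0.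
split; split.
- by case=> _ H k; rewrite -qk.
- move=> H; split => // x; rewrite qf_conj; apply: sumr_ge0 => k _.
  by apply: mulr_ge0 => //; apply: sqr_ge0.
- by case=> _ H k; rewrite -qk; apply: H.
- move=> H; split => // x x0; rewrite qf_conj.
  have : U^T *m x != 0.
    apply: contra x0 => /eqP e; apply/eqP.
    by rewrite -[x]mul1mx -hU -mulmxA e mulmx0.
  case/nz_entry => k yk; rewrite (bigD1 k) //=.
  have h1 : 0 < d 0 k * (U^T *m x) k 0 ^+ 2 by apply: mulr_gt0 => //; apply: sq_gt0.
  have h2 : 0 <= \sum_(i | i != k) d 0 i * (U^T *m x) i 0 ^+ 2.
    by apply: sumr_ge0 => i _; apply: mulr_ge0; [apply: ltW|apply: sqr_ge0].
  lra.
Qed.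
End Aux.

Section Aux2.
Variable R : realType.
Variable n : nat.
Variable U : 'M[R]_n.
Hypothesis hU : U *m U^T = 1%:M.

Lemma diag_comm (a b : 'cV[R]_n) : diag_mx a^T *m b = diag_mx b^T *m a.
Proof.
by rewrite !mul_diag_mx; apply/matrixP => i j; rewrite !mxE (ord1 j) mulrC.
Qed.

Lemma mul_stdvec (M : 'M[R]_n) i j : (M *m stdvec R j) i 0 = M i j.
Proof.
rewrite mxE (bigD1 j) //= big1 ?addr0 => [|k /negbTE kj];
  by rewrite stdvecE ?eqxx ?kj /=; ring.
Qed.

Lemma KmatE (f : 'cV[R]_n) : Kmat U f = U *m diag_mx (gft U f)^T *m U^T.
Proof.
apply/matrixP => i j; rewrite mxE /convop /gft.
rewrite -!mulmxA [diag_mx _ *m (U^T *m f)]diag_comm !mulmxA -mul_stdvec.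
by rewrite -!mulmxA.
Qed.

Variable lam : 'rV[R]_n.
Variable L : 'M[R]_n.
Hypothesis hL : L = U *m diag_mx lam *m U^T.

Lemma powL m : U^T *m (L ^+ m) *m U = diag_mx (\row_k lam 0 k ^+ m).
Proof.
elim: m => [|m IH].
  rewrite expr0 mulmx1 (mulmx1C hU) -diag_const_mx; congr diag_mx.
  by apply/matrixP => i j; rewrite !mxE expr0.
rewrite exprSr -mulmxE {2}hL !mulmxA -[U^T *m L ^+ m *m U *m diag_mx lam *m U^T *m U]mulmxA.
rewrite (mulmx1C hU) mulmx1 IH mulmx_diag; congr diag_mx.
by apply/matrixP => i j; rewrite !mxE exprSr.
Qed.

Lemma f_oneE : f_one U = U *m const_mx 1.
Proof.
apply/matrixP => i j; rewrite summxE !mxE; apply: eq_bigr => k _; rewrite !mxE; ring.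
Qed.

Lemma gE (f : 'cV[R]_n) (c : 'I_n -> R) :
  f = \sum_(k < n) c k *: (L ^+ k *m f_one U) ->
  forall i, (U^T *m f) i 0 = \sum_(k < n) c k * lam 0 i ^+ k.
Proof.
move=> -> i; rewrite mulmx_sumr summxE; apply: eq_bigr => k _.
rewrite -scalemxAr mxE f_oneE !mulmxA powL mul_diag_mx !mxE; ring.
Qed.

Lemma hankelE (f : 'cV[R]_n) r i j :
  hankel U L r f i j = \sum_k lam 0 k ^+ (i + j) * (U^T *m f) k 0.
Proof.
rewrite mxE f_oneE trmx_mul.
rewrite -[f in LHS]mul1mx -hU -!mulmxA [U^T *m (L ^+ _ *m _)]mulmxA.
rewrite [U^T *m L ^+ _ *m (U *m _)]mulmxA powL mul_diag_mx mxE.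
by apply: eq_bigr => k _; rewrite !mxE; ring.
Qed.
End Aux2.

Section Hank.
Variable R : realType.
Variable n r : nat.
Variables (mu w : 'I_n -> R).
Hypothesis hw : forall k l, mu k = mu l -> w k = w l.
Hypothesis hr : size (undup [seq mu i | i <- enum 'I_n]) = r.
Variable H : 'M[R]_r.
Hypothesis hH : forall i j, H i j = \sum_k mu k ^+ (i + j) * w k.

Lemma qfH (x : 'cV[R]_r) :
  (x^T *m H *m x) 0 0 = \sum_k w k * (\sum_i x i 0 * mu k ^+ i) ^+ 2.
Proof.
rewrite mxE.
transitivity (\sum_(i < r) \sum_(j < r) \sum_k w k * ((x i 0 * mu k ^+ i) * (x j 0 * mu k ^+ j))).
  apply: eq_bigr => i _; rewrite mxE big_distrl; apply: eq_bigr => j _.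
  rewrite !mxE hH big_distrr big_distrl. apply eq_bigr => k _. rewrite exprD /=; ring.
rewrite exchange_big.
transitivity (\sum_(j < r) \sum_k \sum_(i < r) w k * ((x i 0 * mu k ^+ i) * (x j 0 * mu k ^+ j))).
  by apply: eq_bigr => j _; rewrite exchange_big.
rewrite exchange_big; apply: eq_bigr => k _.
rewrite expr2 mulr_suml mulr_sumr; apply: eq_bigr => i _.
by rewrite !mulr_sumr; apply: eq_bigr => j _; ring.
Qed.

Lemma Hsym : H^T = H.
Proof. by apply/matrixP => i j; rewrite mxE !hH addnC. Qed.

Let s := undup [seq mu i | i <- enum 'I_n].

Lemma mu_in k : mu k \in s.
Proof. by rewrite mem_undup; apply: map_f; rewrite mem_enum. Qed.

Lemma interp k0 : exists x : 'cV[R]_r,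
  forall k, \sum_i x i 0 * mu k ^+ i = (mu k == mu k0)%:R.
Proof.
pose Q := \prod_(a <- rem (mu k0) s) ('X - a%:P).
have us : uniq s := undup_uniq _.
have sQ : (size Q <= r)%N.
  rewrite size_prod_XsubC size_rem ?mu_in // -hr.
  by have := mu_in k0; rewrite /s; case: (undup _).
have cQ : Q.[mu k0] != 0.
  by rewrite -/(root Q _) root_prod_XsubC (mem_rem_uniq _ us) inE eqxx.
exists (\col_(i < r) (Q`_i / Q.[mu k0])) => k.
have -> : \sum_i (\col_(i < r) (Q`_i / Q.[mu k0])) i 0 * mu k ^+ i = Q.[mu k] / Q.[mu k0].
  rewrite (horner_coef_wide (mu k) sQ) mulr_suml; apply: eq_bigr => i _; rewrite mxE; ring.
case: eqP => [->|ne]; first by rewrite divff.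
have : root Q (mu k) by rewrite root_prod_XsubC (mem_rem_uniq _ us) inE mu_in andbT; apply/eqP.
by move/eqP => ->; rewrite mul0r.
Qed.

Lemma Hpsd : (psdmx H <-> forall k, 0 <= w k) /\ (pdmx H <-> forall k, 0 < w k).
Proof.
have key k0 : exists2 x : 'cV[R]_r, x != 0 &
    (x^T *m H *m x) 0 0 = w k0 * \sum_k (mu k == mu k0)%:R.
  have [x hx] := interp k0; exists x.
    apply/eqP => x0; move: (hx k0); rewrite eqxx x0.
    under eq_bigr => i _ do rewrite mxE mul0r.
    by rewrite big1 // => /eqP; rewrite eq_sym oner_eq0.
  rewrite qfH mulr_sumr; apply: eq_bigr => k _; rewrite hx.
  by case: eqP => [/hw ->|_] /=; ring.
have Spos k0 : 0 < \sum_k (mu k == mu k0)%:R :> R.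
  rewrite (bigD1 k0) //= eqxx /=.
  have : 0 <= \sum_(i | i != k0) (mu i == mu k0)%:R :> R by apply: sumr_ge0 => i _; apply: ler0n.
  lra.
split; split.
- case=> _ hp k0; have [x _ e] := key k0.
  by move: (hp x); rewrite e pmulr_lge0.
- move=> hp; split; first exact: Hsym.
  move=> x; rewrite qfH; apply: sumr_ge0 => k _; apply: mulr_ge0 => //; apply: sqr_ge0.
- case=> _ hp k0; have [x x0 e] := key k0.
  by move: (hp x x0); rewrite e pmulr_lgt0.
- move=> hp; split; first exact: Hsym.
  move=> x x0; rewrite qfH.
  pose xf (i : nat) := oapp (fun j : 'I_r => x j 0) 0 (insub i).
  have xfE (j : 'I_r) : xf j = x j 0 by rewrite /xf valK.
  pose p := \poly_(i < r) xf i.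
  have pE k : p.[mu k] = \sum_i x i 0 * mu k ^+ i.
    rewrite (horner_coef_wide _ (size_poly _ _)); apply: eq_bigr => i _.
    by rewrite coef_poly ltn_ord xfE.
  have p0 : p != 0.
    have [i xi] := nz_entry _ _ _ x0; apply: contra xi => /eqP p0.
    by have := coef_poly r xf i; rewrite -/p p0 coef0 ltn_ord xfE => <-.
  have [k kr] : exists k, ~~ root p (mu k).
    case: (boolP (all (root p) s)) => [hall|/allPn [a ain na]].
      have := max_poly_roots p0 hall (undup_uniq _).
      by rewrite hr ltnNge size_poly.
    move: ain; rewrite mem_undup => /mapP [k _ ak]; exists k; by rewrite -ak.
  rewrite (bigD1 k) //=.
  have h1 : 0 < w k * (\sum_i x i 0 * mu k ^+ i) ^+ 2.
    by apply: mulr_gt0 => //; apply: sq_gt0; rewrite -pE.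
  have h2 : 0 <= \sum_(i | i != k) w i * (\sum_i0 x i0 0 * mu i ^+ i0) ^+ 2.
    by apply: sumr_ge0 => i _; apply: mulr_ge0; [apply: ltW|apply: sqr_ge0].
  lra.
Qed.
End Hank.

Theorem theorem3 (R : realType) (n : nat) (A : 'M[R]_n)
  (U : 'M[R]_n) (lam : 'rV[R]_n) (r : nat) :
  A^T = A ->
  (forall i j, 0 <= A i j) ->
  (forall i, 0 < \sum_k A i k) ->
  U *m U^T = 1%:M ->
  normLap A = U *m diag_mx lam *m U^T ->
  size (undup [seq lam 0 i | i <- enum 'I_n]) = r ->
  forall f : 'cV[R]_n, in_AL U (normLap A) f ->
    (psd_function U f <-> psdmx (hankel U (normLap A) r f)) /\
    (pd_function U f <-> pdmx (hankel U (normLap A) r f)).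
Proof.
move=> _ _ _ hU hL hr f [c hf].
move: hL hf; set L := normLap A => hL hf.
have gEq := @gE _ _ _ hU _ _ hL _ _ hf.
pose g k := (U^T *m f) k 0.
have [Kpsd Kpd] := psd_conj _ _ _ hU (gft U f)^T.
have dE k : (gft U f)^T 0 k = g k by rewrite mxE.
have hw : forall k l, lam 0 k = lam 0 l -> g k = g l.
  by move=> k l e; rewrite /g !gEq e.
have hH : forall i j, hankel U L r f i j = \sum_k lam 0 k ^+ (i + j) * g k.
  by move=> i j; rewrite (@hankelE _ _ _ hU _ _ hL).
have [HP HD] := @Hpsd R n r (fun k => lam 0 k) g hw hr _ hH.
rewrite /psd_function /pd_function KmatE; split.
- rewrite Kpsd HP; split => h k; [rewrite -dE | rewrite dE]; exact: h.
- rewrite Kpd HD; split => h k; [rewrite -dE | rewrite dE]; exact: h.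
Qed.
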